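(* Let $0\le\theta\le\frac{\pi}{2}$. For each positive integer $N$, let $A_N(\theta)$ be the $N\times N$ matrix with entries $\frac{\cos((m-n)\theta)}{m-n}$ for $m\neq n$ and $0$ on the diagonal, and let $B_N(\theta)$ be the $N\times N$ matrix with entries $\frac{\sin((m-n)\theta)}{m-n}$ for $m\neq n$ and $\theta$ on the diagonal ($m,n=1,\dots,N$). Then \begin{enumerate} \item[(1)] $\displaystyle\lim_{N\to\infty} \frac{\operatorname{trace}(A_N(\theta)^2)}{N} = -\left(\frac{\pi^2}{3}+\theta^2-\pi\theta\right)$; \item[(2)] $\displaystyle\lim_{N\to\infty} \frac{\operatorname{trace}(B_N(\theta)^2)}{N} = \pi\theta$. \end{enumerate} *)

(* Defs.v *)
From mathcomp Require Import all_boot all_algebra.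
From mathcomp Require Import Rstruct.
From Stdlib Require Import Reals.

Set Implicit Arguments.
Unset Strict Implicit.
Unset Printing Implicit Defensive.

(* Indices m,n : 'I_N stand for 1..N; only the difference m - n matters. *)
Definition idiff (N : nat) (m n : 'I_N) : R :=
  (INR (nat_of_ord m) - INR (nat_of_ord n))%R.

Definition A_mat (N : nat) (theta : R) : 'M[R]_N :=
  \matrix_(m < N, n < N)
    (if m == n then 0%R
     else (cos (idiff m n * theta) / idiff m n)%R).

Definition B_mat (N : nat) (theta : R) : 'M[R]_N :=
  \matrix_(m < N, n < N)
    (if m == n then theta
     else (sin (idiff m n * theta) / idiff m n)%R).

(* Main.v *)
Require Import Defs.
From Stdlib Require Import Reals Lra Lia.
From mathcomp Require Import all_boot all_algebra.
From mathcomp Require Import Rstruct.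
From mathcomp Require Import zify.

Local Open Scope R_scope.

Fixpoint ssum (f : nat -> R) (n : nat) : R :=
  match n with O => 0 | S m => ssum f m + f m end.

Lemma ssum_ext f g n : (forall k, (k < n)%nat -> f k = g k) -> ssum f n = ssum g n.
Proof.
elim: n => [|n IH] H //=. rewrite IH ?H //; move=> k Hk; apply: H; lia.
Qed.

Lemma ssum_plus f g n : ssum (fun k => f k + g k) n = ssum f n + ssum g n.
Proof. elim: n => [|n IH] /=; [lra| rewrite IH; lra]. Qed.

Lemma ssum_scal c f n : ssum (fun k => c * f k) n = c * ssum f n.
Proof. elim: n => [|n IH] /=; [lra| rewrite IH; lra]. Qed.

Lemma ssum_minus f g n : ssum (fun k => f k - g k) n = ssum f n - ssum g n.
Proof. elim: n => [|n IH] /=; [lra| rewrite IH; lra]. Qed.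

Lemma ssum_le f g n : (forall k, (k < n)%nat -> f k <= g k) -> ssum f n <= ssum g n.
Proof.
elim: n => [|n IH] H /=; first lra.
have := H n (ltac:(lia)). have : ssum f n <= ssum g n by apply: IH => k Hk; apply: H; lia.
lra.
Qed.

Lemma ssum_abs f n : Rabs (ssum f n) <= ssum (fun k => Rabs (f k)) n.
Proof.
elim: n => [|n IH] /=; first by rewrite Rabs_R0; lra.
have := Rabs_triang (ssum f n) (f n). lra.
Qed.

Lemma ssum_const c n : ssum (fun _ => c) n = INR n * c.
Proof. elim: n => [|n IH]; first by simpl; lra. rewrite S_INR /= IH; lra. Qed.

Lemma ssum_recl f n : ssum f (S n) = f O + ssum (fun k => f (S k)) n.
Proof. elim: n => [|n IH]; first by simpl; lra.
change (ssum f n.+2) with (ssum f n.+1 + f n.+1). rewrite IH /=; lra. Qed.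

Lemma ssum_split f n m : ssum f (n + m)%nat = ssum f n + ssum (fun k => f (n + k)%nat) m.
Proof.
elim: m => [|m IH] /=; first by rewrite addn0; lra.
rewrite addnS /= IH; lra.
Qed.

Lemma ssum_rev f n : ssum f n = ssum (fun k => f (n - 1 - k)%nat) n.
Proof.
elim: n f => [|n IH] f //.
rewrite ssum_recl IH /=.
rewrite (ssum_ext (fun k => f (n - 1 - k).+1) (fun k => f (n.+1 - 1 - k)%nat)); last first.
  move=> k Hk; congr f; lia.
have -> : (n.+1 - 1 - n = 0)%nat by lia.
lra.
Qed.

Lemma ssum_swap (F : nat -> nat -> R) n m :
  ssum (fun i => ssum (fun j => F i j) m) n = ssum (fun j => ssum (fun i => F i j) n) m.
Proof.
elim: n => [|n IH] /=.
  rewrite ssum_const; lra.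
by rewrite IH -ssum_plus.
Qed.

Lemma ssum_sumf f n : sum_f_R0 f n = ssum f (S n).
Proof. elim: n => [|n IH] /=; [lra| rewrite IH /=; lra]. Qed.

Lemma big_ssum (f : nat -> R) n : (\sum_(i < n) f i)%R = ssum f n.
Proof.
elim: n => [|n IH]; first by rewrite big_ord0.
by rewrite big_ord_recr /= IH.
Qed.
Definition dist (i j : nat) : nat := (i - j + (j - i))%nat.

Lemma dist_sym i j : dist i j = dist j i.
Proof. rewrite /dist; lia. Qed.

Lemma ssum_dist_last h N : ssum (fun i => h (dist i N)) N = ssum (fun k => h (S k)) N.
Proof.
elim: N h => [|N IH] h //.
rewrite ssum_recl.
rewrite (ssum_ext (fun k => h (dist k.+1 N.+1)) (fun k => (fun x => h x) (dist k N))); last first.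
  by move=> k Hk; congr h; rewrite /dist; lia.
rewrite IH /=.
have -> : dist 0 N.+1 = N.+1 by rewrite /dist; lia.
lra.
Qed.

Lemma double_dist h N :
  ssum (fun i => ssum (fun j => h (dist i j)) N) N =
  INR N * h O + 2 * ssum (fun k => (INR N - INR k - 1) * h (S k)) N.
Proof.
elim: N => [|N IH]; first by simpl; lra.
rewrite (ssum_ext (fun i => ssum (fun j => h (dist i j)) N.+1)
   (fun i => ssum (fun j => h (dist i j)) N + h (dist i N))) //.
rewrite ssum_plus.
change (ssum (fun i => ssum (fun j => h (dist i j)) N) N.+1) with
  (ssum (fun i => ssum (fun j => h (dist i j)) N) N + ssum (fun j => h (dist N j)) N).
change (ssum (fun i => h (dist i N)) N.+1) with
  (ssum (fun i => h (dist i N)) N + h (dist N N)).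
rewrite IH ssum_dist_last.
rewrite (ssum_ext (fun j => h (dist N j)) (fun j => h (dist j N))); last first.
  by move=> k _; rewrite dist_sym.
rewrite ssum_dist_last.
have -> : dist N N = O by rewrite /dist; lia.
rewrite (ssum_ext (fun k => (INR N.+1 - INR k - 1) * h k.+1)
   (fun k => (INR N - INR k - 1) * h k.+1 + h k.+1)); last first.
  by move=> k _; rewrite S_INR; ring.
rewrite ssum_plus.
change (ssum (fun k => (INR N - INR k - 1) * h k.+1) N.+1) with
  (ssum (fun k => (INR N - INR k - 1) * h k.+1) N + (INR N - INR N - 1) * h N.+1).
change (ssum (fun k => h k.+1) N.+1) with (ssum (fun k => h k.+1) N + h N.+1).
rewrite S_INR. ring.
Qed.

Lemma trace_formula N (Mx : 'M[R]_N) (h : nat -> R) :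
  (forall i j : 'I_N, Mx i j * Mx j i = h (dist i j)) ->
  mxtrace (mulmx Mx Mx) = INR N * h O + 2 * ssum (fun k => (INR N - INR k - 1) * h (S k)) N.
Proof.
move=> H.
rewrite /mxtrace.
have E : forall i : 'I_N, (mulmx Mx Mx) i i = (\sum_(j < N) h (dist i j))%R.
  move=> i; rewrite mxE; apply: eq_bigr => j _; exact: H.
under eq_bigr => i _ do rewrite E (big_ssum (fun j => h (dist i j)) N).
rewrite (big_ssum (fun i => ssum (fun j => h (dist i j)) N) N).
exact: double_dist.
Qed.
Definition hA (th : R) (k : nat) : R :=
  if (k == 0)%nat then 0 else - (cos (INR k * th) ^ 2 / INR k ^ 2).
Definition hB (th : R) (k : nat) : R :=
  if (k == 0)%nat then th ^ 2 else sin (INR k * th) ^ 2 / INR k ^ 2.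

Lemma idiff_dist (i j : nat) : i <> j ->
  0 < INR (dist i j) /\
  (INR i - INR j = INR (dist i j) \/ INR i - INR j = - INR (dist i j)).
Proof.
move=> Hij.
have [Hlt|Hlt] : (j < i \/ i < j)%coq_nat by lia.
- have -> : dist i j = (i - j)%coq_nat by rewrite /dist; lia.
  rewrite minus_INR; last lia.
  have := lt_INR j i; move=> H; have := H Hlt. split; [lra|left; lra].
- have -> : dist i j = (j - i)%coq_nat by rewrite /dist; lia.
  rewrite minus_INR; last lia.
  have := lt_INR i j; move=> H; have := H Hlt. split; [lra|right; lra].
Qed.

Lemma A_entry N th (i j : 'I_N) :
  A_mat N th i j * A_mat N th j i = hA th (dist i j).
Proof.
rewrite !mxE /idiff /hA.
case: (eqVneq i j) => [->|Hij].
  have -> : dist j j = 0%nat by rewrite /dist; lia.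
  simpl; ring.
have Hn : (nat_of_ord i) <> (nat_of_ord j) by move=> E; move/eqP: Hij; apply; apply: ord_inj.
have [HD Hu] := idiff_dist _ _ Hn.
have -> : (dist i j == 0)%nat = false by apply/eqP => E; rewrite E /= in HD; lra.
replace (INR j - INR i) with (- (INR i - INR j)) by ring.
move: Hu HD; generalize (INR i - INR j) (INR (dist i j)) => u D Hu HD.
have Hu0 : u <> 0 by case: Hu => ->; lra.
have Hsq : u ^ 2 = D ^ 2 by case: Hu => ->; ring.
have Hc : cos (u * th) ^ 2 = cos (D * th) ^ 2.
  case: Hu => ->; first done.
  replace (- D * th) with (- (D * th)) by ring. by rewrite cos_neg.
replace (- u * th) with (- (u * th)) by ring. rewrite cos_neg.
transitivity (- (cos (u * th) ^ 2 / u ^ 2)); first by field.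
by rewrite Hc Hsq.
Qed.

Lemma B_entry N th (i j : 'I_N) :
  B_mat N th i j * B_mat N th j i = hB th (dist i j).
Proof.
rewrite !mxE /idiff /hB.
case: (eqVneq i j) => [->|Hij].
  have -> : dist j j = 0%nat by rewrite /dist; lia.
  simpl; ring.
have Hn : (nat_of_ord i) <> (nat_of_ord j) by move=> E; move/eqP: Hij; apply; apply: ord_inj.
have [HD Hu] := idiff_dist _ _ Hn.
have -> : (dist i j == 0)%nat = false by apply/eqP => E; rewrite E /= in HD; lra.
replace (INR j - INR i) with (- (INR i - INR j)) by ring.
move: Hu HD; generalize (INR i - INR j) (INR (dist i j)) => u D Hu HD.
have Hu0 : u <> 0 by case: Hu => ->; lra.
have Hsq : u ^ 2 = D ^ 2 by case: Hu => ->; ring.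
have Hc : sin (u * th) ^ 2 = sin (D * th) ^ 2.
  case: Hu => ->; first done.
  replace (- D * th) with (- (D * th)) by ring. rewrite sin_neg; ring.
replace (- u * th) with (- (u * th)) by ring. rewrite sin_neg.
transitivity (sin (u * th) ^ 2 / u ^ 2); first by field.
by rewrite Hc Hsq.
Qed.
Lemma sin2_diff a b : sin a ^ 2 - sin b ^ 2 = sin (a + b) * sin (a - b).
Proof.
rewrite sin_plus sin_minus.
have H1 := sin2_cos2 a. have H2 := sin2_cos2 b. rewrite /Rsqr in H1 H2.
nra.
Qed.

Lemma abs_sin_le x : Rabs (sin x) <= Rabs x.
Proof.
have key : forall y, 0 <= y -> Rabs (sin y) <= y.
  move=> y Hy. case: (Req_dec y 0) => [->|Hy0]; first by rewrite sin_0 Rabs_R0; lra.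
  have Hlt := sin_lt_x y ltac:(lra).
  have HB := SIN_bound y.
  case: (Rle_lt_dec 1 y) => H1.
    apply Rabs_le; lra.
  have Hpos : 0 < sin y by apply: sin_gt_0; have := PI2_3_2; lra.
  rewrite Rabs_right; lra.
case: (Rle_lt_dec 0 x) => Hx.
  rewrite (Rabs_right x); [apply: key; lra|lra].
rewrite (Rabs_left x) //.
have := key (- x) ltac:(lra). rewrite sin_neg Rabs_Ropp; lra.
Qed.

Lemma sin2_lip a b : Rabs (sin a ^ 2 - sin b ^ 2) <= Rabs (a - b).
Proof.
rewrite sin2_diff Rabs_mult.
have := abs_sin_le (a - b). have := SIN_bound (a + b).
have := Rabs_pos (sin (a - b)).
move=> H0 H1 H2.
have : Rabs (sin (a + b)) <= 1 by apply Rabs_le; lra.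
nra.
Qed.

Definition Dk (J : nat) (x : R) : R := 1 + 2 * ssum (fun j => cos (2 * INR (S j) * x)) J.
Definition Fk (L : nat) (x : R) : R := ssum (fun J => Dk J x) L.

Lemma dir J x : sin x * Dk J x = sin ((2 * INR J + 1) * x).
Proof.
elim: J => [|J IH]; first by rewrite /Dk /=; ring_simplify; f_equal; ring.
have -> : Dk J.+1 x = Dk J x + 2 * cos (2 * INR J.+1 * x) by rewrite /Dk /=; ring.
rewrite Rmult_plus_distr_l IH.
set A := 2 * INR J.+1 * x.
replace ((2 * INR J + 1) * x) with (A - x) by (rewrite /A S_INR; ring).
replace ((2 * INR J.+1 + 1) * x) with (A + x) by (rewrite /A; ring).
rewrite sin_plus sin_minus; ring.
Qed.

Lemma fej L x : sin x ^ 2 * Fk L x = sin (INR L * x) ^ 2.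
Proof.
elim: L => [|L IH]; first by rewrite /Fk /= Rmult_0_l sin_0; ring.
have -> : Fk L.+1 x = Fk L x + Dk L x by rewrite /Fk /=.
have E : sin x ^ 2 * Dk L x = sin x * sin ((2 * INR L + 1) * x) by rewrite -dir; ring.
rewrite Rmult_plus_distr_l IH E.
have := sin2_diff (INR L.+1 * x) (INR L * x).
replace (INR L.+1 * x + INR L * x) with ((2 * INR L + 1) * x) by (rewrite S_INR; ring).
replace (INR L.+1 * x - INR L * x) with x by (rewrite S_INR; ring).
lra.
Qed.

Lemma tele K b :
  2 * sin (b / 2) * ssum (fun k => cos (INR k * b)) K = sin (INR K * b - b / 2) + sin (b / 2).
Proof.
elim: K => [|K IH].
  rewrite /= Rmult_0_l. replace (0 - b / 2) with (- (b / 2)) by ring. rewrite sin_neg; ring.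
rewrite [ssum _ K.+1]/= Rmult_plus_distr_l IH.
replace (INR K.+1 * b - b / 2) with (INR K * b + b / 2) by (rewrite S_INR; field).
rewrite sin_plus sin_minus; ring.
Qed.

Lemma cos_sum0 M j : (0 < j)%nat -> (j < M)%nat ->
  ssum (fun k => cos (INR k * (2 * PI * INR j / INR M))) M = 0.
Proof.
move=> Hj HjM.
have HM : 0 < INR M by apply: lt_0_INR; lia.
have HjR : 0 < INR j by apply: lt_0_INR; lia.
have HjM' : INR j < INR M by apply: lt_INR; lia.
set b := 2 * PI * INR j / INR M.
have Hs : 0 < sin (b / 2).
  apply: sin_gt_0.
  - rewrite /b. have := PI_RGT_0. move=> HP.
    apply: Rmult_lt_0_compat; last lra.
    apply: Rdiv_lt_0_compat; nra.
  - rewrite /b. replace (2 * PI * INR j / INR M / 2) with (PI * (INR j / INR M)) by (field; lra).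
    have : INR j / INR M < 1.
      replace (INR j / INR M) with (1 - (INR M - INR j) / INR M) by (field; lra).
      have : 0 < (INR M - INR j) / INR M by apply: Rdiv_lt_0_compat; lra.
      lra.
    have := PI_RGT_0. nra.
have := tele M b.
replace (INR M * b - b / 2) with (- (b / 2) + 2 * INR j * PI) by (rewrite /b; field; lra).
rewrite sin_period sin_neg.
move=> E.
have : 2 * sin (b / 2) * ssum (fun k => cos (INR k * b)) M = 0 by lra.
move/Rmult_integral => [H|//]. lra.
Qed.

Lemma sumF M L : (0 < M)%nat -> (L <= M)%nat ->
  ssum (fun k => Fk L (INR k * (PI / INR M))) M = INR L * INR M.
Proof.
move=> HM HL.
have HMR : 0 < INR M by apply: lt_0_INR; lia.
rewrite /Fk ssum_swap.
rewrite (ssum_ext _ (fun _ => INR M)); first by rewrite ssum_const.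
move=> J HJ.
rewrite /Dk ssum_plus ssum_const ssum_scal ssum_swap.
rewrite (ssum_ext _ (fun _ => 0)); first by rewrite ssum_const; ring.
move=> j Hj.
rewrite -(cos_sum0 M j.+1) //; last lia.
apply: ssum_ext => k _. f_equal. field. lra.
Qed.

Lemma Fk0 L : Fk L 0 = INR L ^ 2.
Proof.
elim: L => [|L IH]; first by rewrite /Fk /=; ring.
rewrite /Fk [ssum _ L.+1]/= -/(Fk L 0) IH /Dk.
rewrite (ssum_ext _ (fun _ => 1)); last by move=> j _; rewrite Rmult_0_r cos_0.
rewrite ssum_const S_INR; ring.
Qed.
Definition tt (a phi : R) (k : nat) : R := sin (INR k * phi) ^ 2 / sin (INR k * a) ^ 2.

Lemma exact_id M L : (0 < M)%nat -> (L <= M)%nat ->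
  ssum (fun k => tt (PI / INR M) (INR L * (PI / INR M)) (S k)) (M - 1) =
  INR L * (INR M - INR L).
Proof.
move=> HM HL.
have HMR : 0 < INR M by apply: lt_0_INR; lia.
have := sumF _ _ HM HL.
case: M HM HL HMR => [|M'] // _ HL HMR.
rewrite ssum_recl Rmult_0_l Fk0.
have -> : (M'.+1 - 1 = M')%nat by lia.
rewrite (ssum_ext (fun k => Fk L (INR k.+1 * (PI / INR M'.+1)))
   (fun k => tt (PI / INR M'.+1) (INR L * (PI / INR M'.+1)) k.+1)).
  move=> E; lra.
move=> k Hk.
set x := INR k.+1 * (PI / INR M'.+1).
have Hx : 0 < sin x.
  apply: sin_gt_0.
  - rewrite /x. apply: Rmult_lt_0_compat; first by apply: lt_0_INR; lia.
    apply: Rdiv_lt_0_compat; [exact: PI_RGT_0|lra].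
  - rewrite /x. have Hk' : INR k.+1 < INR M'.+1 by apply: lt_INR; lia.
    have := PI_RGT_0 => HP.
    replace (INR k.+1 * (PI / INR M'.+1)) with (PI * (INR k.+1 / INR M'.+1)) by (field; lra).
    have : INR k.+1 / INR M'.+1 < 1.
      replace (INR k.+1 / INR M'.+1) with (1 - (INR M'.+1 - INR k.+1) / INR M'.+1) by (field; lra).
      have : 0 < (INR M'.+1 - INR k.+1) / INR M'.+1 by apply: Rdiv_lt_0_compat; lra.
      lra.
    nra.
have := fej L x. rewrite /tt -/x.
replace (INR k.+1 * (INR L * (PI / INR M'.+1))) with (INR L * x) by (rewrite /x; ring).
move=> <-. field. lra.
Qed.

Lemma sin_nPI L : sin (INR L * PI) = 0.
Proof. apply: sin_eq_0_1. exists (Z.of_nat L). by rewrite -INR_IZR_INZ. Qed.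

Lemma tt_sym M L k : (0 < M)%nat -> (k <= M)%nat ->
  tt (PI / INR M) (INR L * (PI / INR M)) (M - k) = tt (PI / INR M) (INR L * (PI / INR M)) k.
Proof.
move=> HM Hk.
have HMR : 0 < INR M by apply: lt_0_INR; lia.
rewrite /tt minus_INR; last lia.
replace ((INR M - INR k) * (PI / INR M)) with (PI - INR k * (PI / INR M)) by (field; lra).
rewrite sin_PI_x.
replace ((INR M - INR k) * (INR L * (PI / INR M))) with (INR L * PI - INR k * (INR L * (PI / INR M)))
  by (field; lra).
rewrite sin_minus sin_nPI.
have := sin2_cos2 (INR L * PI). rewrite sin_nPI /Rsqr => H.
have Hc : cos (INR L * PI) ^ 2 = 1 by nra.
f_equal.
transitivity (cos (INR L * PI) ^ 2 * sin (INR k * (INR L * (PI / INR M))) ^ 2); first ring.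
rewrite Hc; ring.
Qed.

Lemma halving n (t : nat -> R) :
  (forall k, (k <= n + n + 1)%nat -> t (n + n + 1 - k)%nat = t k) ->
  ssum (fun k => t (S k)) (n + n) = 2 * ssum (fun k => t (S k)) n.
Proof.
move=> Hs.
rewrite ssum_split.
rewrite (ssum_ext (fun k => t (n + k).+1) (fun k => t (n - k)%nat)); last first.
  move=> k Hk. rewrite -Hs; last lia. congr t; lia.
rewrite [X in _ + X = _](ssum_rev (fun k => t (n - k)%nat)).
rewrite (ssum_ext (fun k => t (n - (n - 1 - k))%nat) (fun k => t k.+1)); last first.
  move=> k Hk; congr t; lia.
ring.
Qed.

Lemma div_le_c a c d : 0 < d -> a <= c * d -> a / d <= c.
Proof.
move=> Hd H. rewrite /Rdiv. apply (Rmult_le_reg_r d); first lra.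
rewrite Rmult_assoc Rinv_l; lra.
Qed.

Lemma div_ge_0 a d : 0 < d -> 0 <= a -> 0 <= a / d.
Proof. move=> Hd Ha. rewrite /Rdiv. have := Rinv_0_lt_compat d Hd. nra. Qed.

Lemma r_bound y : 0 < y <= 2 ->
  0 < sin y /\ 0 <= 1 / sin y ^ 2 - 1 / y ^ 2 <= 3.
Proof.
move=> Hy.
have [Hlb _] := pre_sin_bound y 0 ltac:(lra) ltac:(lra).
have E : sin_approx y (2 * 0 + 1) = y - y ^ 3 / 6 by rewrite /sin_approx /sin_term /=; field.
rewrite E in Hlb.
have Hlt := sin_lt_x y ltac:(lra).
set s := sin y in Hlb Hlt *.
have Hy2 : y ^ 2 <= 4 by nra.
have Hs3 : y / 3 <= s by nra.
have Hs : 0 < s by lra.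
split; first exact Hs.
have H1 : y - s <= y ^ 3 / 6 by lra.
have H3 : (y - s) * (y + s) <= y ^ 3 / 6 * (2 * y).
  apply: Rmult_le_compat; lra.
have H4 : y ^ 2 / 9 <= s ^ 2 by nra.
replace (1 / s ^ 2 - 1 / y ^ 2) with ((y ^ 2 - s ^ 2) / (s ^ 2 * y ^ 2)) by (field; lra).
have Hd : 0 < s ^ 2 * y ^ 2 by apply: Rmult_lt_0_compat; nra.
split.
  apply: div_ge_0 => //. nra.
apply: div_le_c => //.
have : y ^ 2 - s ^ 2 <= y ^ 4 / 3 by nra.
have : y ^ 4 / 3 <= 3 * (s ^ 2 * y ^ 2) by nra.
lra.
Qed.
Definition Tn (th : R) (n : nat) : R := ssum (fun k => sin (INR (S k) * th) ^ 2 / INR (S k) ^ 2) n.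
Definition Hn (n : nat) : R := ssum (fun k => 1 / INR (S k)) n.

Lemma Hn_ge0 n : 0 <= Hn n.
Proof.
rewrite /Hn. rewrite -(Rmult_0_r (INR n)) -ssum_const.
apply: ssum_le => k _. apply: div_ge_0; [apply: lt_0_INR; lia|lra].
Qed.

Lemma exists_floor x : 0 <= x -> exists L : nat, INR L <= x < INR L + 1.
Proof.
move=> Hx.
have Hx' := introT RleP Hx.
have /andP [H1 H2] := Num.Theory.truncn_itv Hx'.
exists (Num.Def.trunc x).
move/RleP: H1. move/RltP: H2. rewrite -!INRE S_INR. lra.
Qed.

Lemma div_le_div x y d1 d2 : 0 < d1 -> 0 < d2 -> x * d2 <= y * d1 -> x / d1 <= y / d2.
Proof.
move=> H1 H2 H.
replace (x / d1) with ((x * d2) / (d1 * d2)) by (field; lra).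
replace (y / d2) with ((y * d1) / (d1 * d2)) by (field; lra).
rewrite /Rdiv. apply: Rmult_le_compat_r => //.
left. apply: Rinv_0_lt_compat. nra.
Qed.

Lemma Tn_lip th phi n : Rabs (Tn th n - Tn phi n) <= Rabs (th - phi) * Hn n.
Proof.
rewrite /Tn /Hn -ssum_minus -ssum_scal.
apply: Rle_trans (ssum_abs _ _) _.
apply: ssum_le => k _.
have Hk : 0 < INR k.+1 by apply: lt_0_INR; lia.
replace (sin (INR k.+1 * th) ^ 2 / INR k.+1 ^ 2 - sin (INR k.+1 * phi) ^ 2 / INR k.+1 ^ 2)
  with ((sin (INR k.+1 * th) ^ 2 - sin (INR k.+1 * phi) ^ 2) / INR k.+1 ^ 2) by (field; lra).
rewrite /Rdiv Rabs_mult Rabs_inv.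
rewrite (Rabs_right (INR k.+1 ^ 2)); last by apply: Rle_ge; apply: pow_le; lra.
apply: Rle_trans.
  apply: Rmult_le_compat_r; first by left; apply: Rinv_0_lt_compat; apply: pow_lt; lra.
  apply: sin2_lip.
replace (INR k.+1 * th - INR k.+1 * phi) with (INR k.+1 * (th - phi)) by ring.
rewrite Rabs_mult (Rabs_right (INR k.+1)); last lra.
right. field. lra.
Qed.
Lemma B3_gen th phi a : 0 <= th - phi <= a -> - PI <= th + phi - PI <= PI ->
  Rabs (phi * (PI - phi) / 2 - th * (PI - th) / 2) <= a * PI / 2.
Proof.
move=> Hd Hs. have HP := PI_RGT_0. move: Hd Hs HP. generalize PI => p Hd Hs HP.
replace (phi * (p - phi) / 2 - th * (p - th) / 2) with ((th - phi) * (th + phi - p) / 2) by (unfold Rdiv; ring).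
apply Rabs_le. split; nra.
Qed.

Lemma core_bound th n : 0 <= th <= PI -> (1 <= n)%nat ->
  Rabs (Tn th n - th * (PI - th) / 2) <= 64 * ((1 + Hn n) / (INR n + 1)).
Proof.
move=> Hth Hn1.
have HP := PI_RGT_0. have HP4 := PI_4.
have HnR : 1 <= INR n by have := le_INR 1 n ltac:(lia); simpl.
set M := (n + n + 1)%nat.
have HM0 : (0 < M)%nat by rewrite /M; lia.
have HMR : INR M = 2 * INR n + 1 by rewrite /M !plus_INR /=; ring.
set a := PI / INR M.
have Ha : 0 < a by rewrite /a; apply: Rdiv_lt_0_compat; lra.
have Hx0 : 0 <= INR M * th / PI by apply: div_ge_0; nra.
have [L [HL1 HL2]] := exists_floor _ Hx0.
have HL0 : 0 <= INR L := pos_INR L.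
set phi := INR L * a.
have Ex : INR M * th / PI * a = th by rewrite /a; field; lra.
have Hphi : phi <= th < phi + a.
  rewrite /phi. split.
    rewrite -Ex. apply: Rmult_le_compat_r; lra.
  rewrite -Ex. have := Rmult_lt_compat_r a _ _ Ha HL2. lra.
have HLM : (L <= M)%nat.
  apply/leP; apply: INR_le.
  have : INR M * th / PI <= INR M.
    replace (INR M * th / PI) with (INR M * (th / PI)) by (field; lra).
    have : th / PI <= 1 by apply: div_le_c; lra.
    nra.
  lra.
have Eid := exact_id M L HM0 HLM.
rewrite -/a -/phi in Eid.
have EM : (M - 1 = n + n)%nat by rewrite /M; lia.
rewrite EM in Eid.
rewrite (halving n (tt a phi)) in Eid; last first.
  move=> k Hk. rewrite /a /phi. exact: tt_sym.
have Hy : forall k, (k < n)%nat -> 0 < INR (S k) * a <= 2.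
  move=> k Hk.
  have HkR : INR (S k) <= INR n by apply: le_INR; lia.
  have HkR0 : 0 < INR (S k) by apply: lt_0_INR; lia.
  split; first by apply: Rmult_lt_0_compat.
  have : INR n * a <= 2.
    rewrite /a. replace (INR n * (PI / INR M)) with (INR n * PI / INR M) by (field; lra).
    apply: div_le_c; first lra. nra.
  nra.
set rr := fun k => 1 / sin (INR (S k) * a) ^ 2 - 1 / (INR (S k) * a) ^ 2.
set Rr := ssum (fun k => sin (INR (S k) * phi) ^ 2 * rr k) n.
have Hdec : ssum (fun k => tt a phi (S k)) n = (INR M ^ 2 / PI ^ 2) * Tn phi n + Rr.
  rewrite /Tn /Rr -ssum_scal -ssum_plus. apply: ssum_ext => k Hk.
  have [Hs _] := r_bound _ (Hy k Hk).
  have HkR0 : 0 < INR (S k) by apply: lt_0_INR; lia.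
  rewrite /tt /rr /a. field. split; [lra|]. split; [lra|]. split; [lra|].
  rewrite /a in Hs; lra.
have HR : 0 <= Rr <= 3 * INR n.
  have Hterm : forall k, (k < n)%nat -> 0 <= sin (INR (S k) * phi) ^ 2 * rr k <= 3.
    move=> k Hk. have [_ Hr] := r_bound _ (Hy k Hk).
    have := SIN_bound (INR (S k) * phi). rewrite /rr. move=> Hb.
    have Hs2 : 0 <= sin (INR k.+1 * phi) ^ 2 <= 1 by nra.
    nra.
  split.
    rewrite -(Rmult_0_r (INR n)) -ssum_const. apply: ssum_le => k Hk. by case: (Hterm k Hk).
  rewrite Rmult_comm -ssum_const. apply: ssum_le => k Hk. by case: (Hterm k Hk).
have E0 : (INR M ^ 2 / PI ^ 2) * Tn phi n = INR L * (INR M - INR L) / 2 - Rr by lra.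
have HMpos : 0 < INR M by lra.
have E1 : Tn phi n = PI ^ 2 / INR M ^ 2 * (INR L * (INR M - INR L) / 2 - Rr).
  rewrite -E0. field. lra.
have E2 : phi * (PI - phi) / 2 = PI ^ 2 / INR M ^ 2 * (INR L * (INR M - INR L) / 2).
  rewrite /phi /a. field. lra.
have Hc : 0 <= PI ^ 2 / INR M ^ 2 by apply: div_ge_0; nra.
have B1 : Rabs (Tn th n - Tn phi n) <= a * Hn n.
  apply: Rle_trans (Tn_lip _ _ _) _.
  apply: Rmult_le_compat_r; first exact: Hn_ge0.
  apply Rabs_le; lra.
have B2 : Rabs (Tn phi n - phi * (PI - phi) / 2) <= PI ^ 2 / INR M ^ 2 * (3 * INR n).
  rewrite E1 E2.
  replace (PI ^ 2 / INR M ^ 2 * (INR L * (INR M - INR L) / 2 - Rr) -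
     PI ^ 2 / INR M ^ 2 * (INR L * (INR M - INR L) / 2)) with (- (PI ^ 2 / INR M ^ 2 * Rr)) by ring.
  rewrite Rabs_Ropp Rabs_right; last by apply: Rle_ge; nra.
  apply: Rmult_le_compat_l => //; lra.
have B3 : Rabs (phi * (PI - phi) / 2 - th * (PI - th) / 2) <= a * PI / 2.
  have Hphi0 : 0 <= phi by apply: Rmult_le_pos; lra.
  apply: B3_gen; lra.
have Ha4 : a <= 4 * / (INR n + 1).
  rewrite /a. change (4 * / (INR n + 1)) with (4 / (INR n + 1)).
  apply: div_le_div; [lra|lra|nra].
have HB2 : PI ^ 2 / INR M ^ 2 * (3 * INR n) <= 48 * / (INR n + 1).
  replace (PI ^ 2 / INR M ^ 2 * (3 * INR n)) with (PI ^ 2 * (3 * INR n) / INR M ^ 2) by (field; lra).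
  change (48 * / (INR n + 1)) with (48 / (INR n + 1)).
  apply: div_le_div; [nra|lra|].
  have HP2 : PI ^ 2 <= 16 by nra.
  rewrite HMR. nra.
have Hw : 0 < / (INR n + 1) by apply: Rinv_0_lt_compat; lra.
have HH := Hn_ge0 n.
have T1 : Rabs (Tn th n - th * (PI - th) / 2) <=
  Rabs (Tn th n - Tn phi n) + Rabs (Tn phi n - phi * (PI - phi) / 2) +
  Rabs (phi * (PI - phi) / 2 - th * (PI - th) / 2).
  have := Rabs_triang (Tn th n - Tn phi n) (Tn phi n - phi * (PI - phi) / 2).
  have := Rabs_triang (Tn th n - Tn phi n + (Tn phi n - phi * (PI - phi) / 2))
    (phi * (PI - phi) / 2 - th * (PI - th) / 2).
  replace (Tn th n - Tn phi n + (Tn phi n - phi * (PI - phi) / 2) +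
    (phi * (PI - phi) / 2 - th * (PI - th) / 2)) with (Tn th n - th * (PI - th) / 2) by ring.
  replace (Tn th n - Tn phi n + (Tn phi n - phi * (PI - phi) / 2)) with
    (Tn th n - phi * (PI - phi) / 2) by ring.
  lra.
have : a * Hn n <= 4 * / (INR n + 1) * Hn n by apply: Rmult_le_compat_r.
have : a * PI / 2 <= 8 * / (INR n + 1) by nra.
rewrite /Rdiv [(1 + Hn n) * _]Rmult_comm.
nra.
Qed.
Lemma squeeze (u w : nat -> R) l :
  (forall n, (1 <= n)%nat -> Rabs (u n - l) <= Rabs (w n)) -> Un_cv w 0 -> Un_cv u l.
Proof.
move=> H Hw eps Heps. case: (Hw eps Heps) => N HN. exists (N + 1)%nat. move=> n Hn.
rewrite /R_dist. apply: Rle_lt_trans (H n _) _; first lia.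
have := HN n ltac:(lia). by rewrite /R_dist Rminus_0_r.
Qed.

Lemma cv_ext (u v : nat -> R) l : (forall n, u n = v n) -> Un_cv u l -> Un_cv v l.
Proof. move=> H Hu eps Heps. case: (Hu eps Heps) => N HN. exists N => n Hn. rewrite -H. exact: HN. Qed.

Lemma cv_const c : Un_cv (fun _ => c) c.
Proof. move=> eps Heps. exists O => n _. rewrite /R_dist Rminus_eq_0 Rabs_R0. lra. Qed.

Lemma cv_shift (u : nat -> R) l : Un_cv u l -> Un_cv (fun k => u (S k)) l.
Proof. move=> Hu eps Heps. case: (Hu eps Heps) => N HN. exists N => n Hn. apply: HN. lia. Qed.

Lemma cv_double (u : nat -> R) l : Un_cv u l -> Un_cv (fun k => u (k + k)%nat) l.
Proof. move=> Hu eps Heps. case: (Hu eps Heps) => N HN. exists N => n Hn. apply: HN. lia. Qed.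

Lemma inv_cv : Un_cv (fun n => 1 / (INR n + 1)) 0.
Proof.
move=> eps Heps.
have Hx : 0 <= 1 / eps by apply: div_ge_0; lra.
have [L [_ HL]] := exists_floor _ Hx.
exists L => n Hn.
have HnL : INR L <= INR n by apply: le_INR; lia.
rewrite /R_dist Rminus_0_r Rabs_right; last by apply: Rle_ge; apply: div_ge_0; [have := pos_INR n; lra|lra].
have Hn0 := pos_INR n.
apply: (Rle_lt_trans _ (1 / (INR L + 1))).
  apply: div_le_div; lra.
have : 1 < eps * (INR L + 1).
  have E : eps * (1 / eps) = 1 by field; lra.
  rewrite -E. apply: Rmult_lt_compat_l; lra.
move=> H. apply: (Rmult_lt_reg_r (INR L + 1)); first lra.
replace (1 / (INR L + 1) * (INR L + 1)) with 1 by (field; lra). lra.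
Qed.

Lemma Hn_over_n : Un_cv (fun n => Hn n / INR n) 0.
Proof.
have H1 : Un_cv (fun k => 1 / INR (S k)) 0.
  apply: cv_ext inv_cv => n. by rewrite S_INR.
have := Cesaro_1 _ _ H1.
apply: squeeze => n Hn1.
rewrite ssum_sumf. have -> : (S (Init.Nat.pred n)) = n by lia.
rewrite /Hn !Rminus_0_r. lra.
Qed.

Lemma err_cv : Un_cv (fun n => 64 * ((1 + Hn n) / (INR n + 1))) 0.
Proof.
have Hw : Un_cv (fun n => 64 * (1 / (INR n + 1) + Hn n / INR n)) 0.
  have := CV_mult _ _ _ _ (cv_const 64) (CV_plus _ _ _ _ inv_cv Hn_over_n).
  by rewrite Rplus_0_r Rmult_0_r.
apply: squeeze Hw => n Hn1.
have HnR : 1 <= INR n by have := le_INR 1 n ltac:(lia); simpl.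
have HH := Hn_ge0 n.
have Hq : Hn n / (INR n + 1) <= Hn n / INR n by apply: div_le_div; nra.
have Hp : 0 <= (1 + Hn n) / (INR n + 1) by apply: div_ge_0; lra.
have Hp2 : 0 <= Hn n / INR n by apply: div_ge_0; lra.
have Hp3 : 0 <= 1 / (INR n + 1) by apply: div_ge_0; lra.
rewrite Rminus_0_r !Rabs_right; try (apply: Rle_ge; nra).
replace ((1 + Hn n) / (INR n + 1)) with (1 / (INR n + 1) + Hn n / (INR n + 1)) by (field; lra).
lra.
Qed.

Lemma core_cv th : 0 <= th <= PI -> Un_cv (Tn th) (th * (PI - th) / 2).
Proof.
move=> Hth. apply: squeeze err_cv => n Hn1.
apply: Rle_trans (core_bound th n Hth Hn1) _.
apply: Rle_abs.
Qed.

Definition Zs (n : nat) : R := ssum (fun k => 1 / INR (S k) ^ 2) n.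

Lemma Z_relation n : Zs (n + n) = Tn (PI / 2) (n + n) + Zs n / 4.
Proof.
elim: n => [|n IH]; first by rewrite /Zs /Tn /=; field.
have -> : (n.+1 + n.+1 = (n + n).+2)%nat by lia.
have ZS : forall m, Zs (S m) = Zs m + 1 / INR (S m) ^ 2 by [].
have TS : forall m th, Tn th (S m) = Tn th m + sin (INR (S m) * th) ^ 2 / INR (S m) ^ 2 by [].
rewrite !ZS !TS IH.
have E1 : INR (n + n).+1 * (PI / 2) = PI / 2 + INR n * PI by rewrite S_INR plus_INR; field.
have E2 : INR (n + n).+2 * (PI / 2) = INR n.+1 * PI by rewrite !S_INR plus_INR; field.
rewrite E1 E2 sin_nPI sin_plus sin_PI2 cos_PI2 sin_nPI.
have := sin2_cos2 (INR n * PI). rewrite sin_nPI /Rsqr => Hc.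
have Hc2 : cos (INR n * PI) ^ 2 = 1 by nra.
have HnR := pos_INR n.
rewrite ?S_INR ?plus_INR.
replace ((1 * cos (INR n * PI) + 0 * 0) ^ 2) with (cos (INR n * PI) ^ 2) by ring.
rewrite Hc2.
field. lra.
Qed.

Lemma Zs_bound n : Zs (S n) <= 2 - 1 / INR (S n).
Proof.
elim: n => [|n IH]; first by rewrite /Zs /=; lra.
have -> : Zs (S (S n)) = Zs (S n) + 1 / INR (S (S n)) ^ 2 by [].
have HnR := pos_INR n.
rewrite !S_INR in IH *.
have : 1 / (INR n + 1 + 1) ^ 2 <= 1 / (INR n + 1) - 1 / (INR n + 1 + 1).
  replace (1 / (INR n + 1) - 1 / (INR n + 1 + 1)) with (1 / ((INR n + 1) * (INR n + 1 + 1))) by (field; lra).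
  apply: div_le_div; nra.
lra.
Qed.

Lemma basel : Un_cv Zs (PI ^ 2 / 6).
Proof.
have Hg : Un_growing Zs.
  move=> n. have -> : Zs (S n) = Zs n + 1 / INR (S n) ^ 2 by [].
  have : 0 <= 1 / INR (S n) ^ 2 by apply: div_ge_0; [apply: pow_lt; apply: lt_0_INR; lia|lra].
  lra.
have Hub : has_ub Zs.
  exists 2 => x [i ->]. case: i => [|i]; first by rewrite /Zs /=; lra.
  have := Zs_bound i. have : 0 <= 1 / INR (S i) by apply: div_ge_0; [apply: lt_0_INR; lia|lra].
  lra.
have [S HS] := growing_cv _ Hg Hub.
have H2 := cv_double _ _ HS.
have HT := cv_double _ _ (core_cv (PI / 2) ltac:(have := PI_RGT_0; lra)).
have H4 := CV_mult _ _ _ _ HS (cv_const (/ 4)).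
have H5 := CV_plus _ _ _ _ HT H4.
have H6 : Un_cv (fun k => Zs (k + k)) (PI / 2 * (PI - PI / 2) / 2 + S * / 4).
  apply: cv_ext H5 => n /=. by rewrite Z_relation.
have := UL_sequence _ _ _ H2 H6.
move=> E. have -> : PI ^ 2 / 6 = S.
  move: E. generalize PI => p. move=> E. field_simplify in E. lra.
exact HS.
Qed.
Lemma trace_div N (Mx : 'M[R]_N) h : (1 <= N)%nat ->
  (forall i j : 'I_N, Mx i j * Mx j i = h (dist i j)) ->
  mxtrace (mulmx Mx Mx) / INR N =
  h O + 2 * ssum (fun k => h (S k)) N - 2 * (ssum (fun k => INR (S k) * h (S k)) N / INR N).
Proof.
move=> HN H. rewrite (trace_formula N Mx h H).
have HNR : 0 < INR N by apply: lt_0_INR; lia.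
rewrite (ssum_ext _ (fun k => INR N * h (S k) - INR (S k) * h (S k))); last first.
  move=> k _. rewrite S_INR; ring.
rewrite ssum_minus ssum_scal. field. lra.
Qed.

Lemma err_gen (g : nat -> R) :
  (forall k, Rabs (INR (S k) * g k) <= 1 / INR (S k)) ->
  Un_cv (fun N => 2 * (ssum (fun k => INR (S k) * g k) N / INR N)) 0.
Proof.
move=> Hg.
have Hw : Un_cv (fun N => 2 * (Hn N / INR N)) 0.
  have := CV_mult _ _ _ _ (cv_const 2) Hn_over_n. by rewrite Rmult_0_r.
apply: squeeze Hw => n Hn1.
have HnR : 0 < INR n by apply: lt_0_INR; lia.
rewrite !Rminus_0_r (Rabs_right (2 * (Hn n / INR n))); last first.
  apply: Rle_ge; have := Hn_ge0 n => HH; have : 0 <= Hn n / INR n by apply: div_ge_0.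
  lra.
rewrite Rabs_mult Rabs_right; last lra.
apply: Rmult_le_compat_l; first lra.
rewrite /Rdiv Rabs_mult Rabs_inv (Rabs_right (INR n)); last lra.
apply: Rmult_le_compat_r; first by left; apply: Rinv_0_lt_compat.
apply: Rle_trans (ssum_abs _ _) _.
apply: ssum_le => k _. exact: Hg.
Qed.

Lemma hA_S th k : hA th (S k) = sin (INR (S k) * th) ^ 2 / INR (S k) ^ 2 - 1 / INR (S k) ^ 2.
Proof.
rewrite /hA. have -> : (k.+1 == 0)%nat = false by [].
have := sin2_cos2 (INR (S k) * th). rewrite /Rsqr => E.
have Hk : 0 < INR (S k) by apply: lt_0_INR; lia.
replace (cos (INR k.+1 * th) ^ 2) with (1 - sin (INR k.+1 * th) ^ 2) by nra.
field. lra.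
Qed.

Lemma hB_S th k : hB th (S k) = sin (INR (S k) * th) ^ 2 / INR (S k) ^ 2.
Proof. rewrite /hB. by have -> : (k.+1 == 0)%nat = false by []. Qed.

Lemma sq_term_bound x k : 0 <= x <= 1 ->
  Rabs (INR (S k) * (x / INR (S k) ^ 2)) <= 1 / INR (S k).
Proof.
move=> Hx. have Hk : 0 < INR (S k) by apply: lt_0_INR; lia.
replace (INR (S k) * (x / INR (S k) ^ 2)) with (x / INR (S k)) by (field; lra).
rewrite Rabs_right; last by apply: Rle_ge; apply: div_ge_0; lra.
apply: div_le_div; nra.
Qed.

Theorem theorem3 (theta : R) (h0 : Rle 0 theta) (h1 : Rle theta (Rdiv PI 2)) :
  Un_cv (fun k : nat =>
           Rdiv (mxtrace (mulmx (A_mat k.+1 theta) (A_mat k.+1 theta)))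
                (INR k.+1))
        (Ropp (PI ^ 2 / 3 + theta ^ 2 - PI * theta))%R
  /\
  Un_cv (fun k : nat =>
           Rdiv (mxtrace (mulmx (B_mat k.+1 theta) (B_mat k.+1 theta)))
                (INR k.+1))
        (Rmult PI theta).
Proof.
have HP := PI_RGT_0.
have Hth : 0 <= theta <= PI by lra.
have HT := core_cv theta Hth.
split.
- set E := fun N => 2 * (ssum (fun k => INR (S k) * hA theta (S k)) N / INR N).
  have HE : Un_cv E 0.
    apply: err_gen => k. rewrite /hA. have -> : (k.+1 == 0)%nat = false by [].
    replace (INR k.+1 * - (cos (INR k.+1 * theta) ^ 2 / INR k.+1 ^ 2))
      with (- (INR k.+1 * (cos (INR k.+1 * theta) ^ 2 / INR k.+1 ^ 2))) by ring.
    rewrite Rabs_Ropp. apply: sq_term_bound.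
    have := COS_bound (INR k.+1 * theta). nra.
  have L1 := CV_minus _ _ _ _ (CV_mult _ _ _ _ (cv_const 2) (CV_minus _ _ _ _ HT basel)) HE.
  have L2 := cv_shift _ _ L1.
  have -> : - (PI ^ 2 / 3 + theta ^ 2 - PI * theta) =
    2 * (theta * (PI - theta) / 2 - PI ^ 2 / 6) - 0.
    generalize PI => p. field.
  apply: cv_ext L2 => k.
  rewrite (trace_div _ _ (hA theta)); [|done|exact: A_entry].
  have -> : hA theta 0 = 0 by [].
  rewrite (ssum_ext (fun k => hA theta (S k))
    (fun k => sin (INR (S k) * theta) ^ 2 / INR (S k) ^ 2 - 1 / INR (S k) ^ 2)); last first.
    move=> j _; exact: hA_S.
  rewrite ssum_minus /Tn /Zs /E. ring.
- set E := fun N => 2 * (ssum (fun k => INR (S k) * hB theta (S k)) N / INR N).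
  have HE : Un_cv E 0.
    apply: err_gen => k. rewrite hB_S. apply: sq_term_bound.
    have := SIN_bound (INR k.+1 * theta). nra.
  have L1 := CV_minus _ _ _ _ (CV_plus _ _ _ _ (cv_const (theta ^ 2)) (CV_mult _ _ _ _ (cv_const 2) HT)) HE.
  have L2 := cv_shift _ _ L1.
  have -> : PI * theta = theta ^ 2 + 2 * (theta * (PI - theta) / 2) - 0.
    generalize PI => p. field.
  apply: cv_ext L2 => k.
  rewrite (trace_div _ _ (hB theta)); [|done|exact: B_entry].
  have -> : hB theta 0 = theta ^ 2 by [].
  rewrite (ssum_ext (fun k => hB theta (S k))
    (fun k => sin (INR (S k) * theta) ^ 2 / INR (S k) ^ 2)); last first.
    move=> j _; exact: hB_S.
  rewrite /Tn /E. ring.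
Qed.
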